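(* For all positive integers $m,n$, the generalized Mazur pattern $Q_{m,n}$ is isotopic to $Q_{n,m}$ inside the solid torus $S^1\times D^2$ (as unoriented knots; with orientations, $Q_{m,n}$ is isotopic to the reverse of $Q_{n,m}$).
   Context: Generalized Mazur pattern: for positive integers $m,n$, $Q_{m,n}\subset V=S^1\times D^2$ is the knot obtained as follows: starting from a point in the solid torus, wind $m$ times around the $S^1$ direction, then turn around and wind $n$ times back; join the top endpoint of the resulting arc to the bottom endpoint by an arc that crosses under the first $n$ strands and over the next $m$ strands, producing a clasp where the pattern turns around. *)

(* Defs.v *)
From mathcomp Require Import all_boot all_order all_algebra.
From mathcomp Require Import all_classical all_reals all_analysis.
Unset Strict Implicit. Unset Printing Implicit Defensive.
Import Order.TTheory GRing.Theory Num.Theory.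
Import numFieldNormedType.Exports.
Local Open Scope classical_set_scope.
Local Open Scope ring_scope.

(* Model of the solid torus V = S^1 x D^2: the (closed) annulus
   1 <= x^2 + y^2 <= 9 in the plane times the interval -1 <= z <= 1,
   as a subset of R^3 = (R * R) * R. *)
Definition solid_torus (R : realType) : set (R * R * R) :=
  [set p | (1 <= p.1.1 ^+ 2 + p.1.2 ^+ 2 <= 9) /\ (-1 <= p.2 <= 1)].

(* Cylindrical coordinates: radius r, angle 2*pi*th (th measured in turns),
   height z. *)
Definition cyl (R : realType) (r th z : R) : R * R * R :=
  (r * cos (2 * pi * th), r * sin (2 * pi * th), z).

Definition lerp2 (R : realType) (a b : R * R) (l : R) : R * R :=
  ((1 - l) * a.1 + l * b.1, (1 - l) * a.2 + l * b.2).

(* The generalized Mazur pattern Q_{m,n}, as a closed PL-in-cylindrical-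
   coordinates curve parametrised by t in [0, L + 5], L = m + n + 1.
   - t in [0, L]: a spiral at height 0 whose radius 3/2 + t/L increases
     strictly (so this part is embedded); its angle (in turns) first
     increases from 0 to m + 1/2 (winding m times, plus half a turn to
     reach the turning point off the closing ray), then decreases from
     m + 1/2 to m - n (winding n times back).
   - t in [L, L + 5]: the closing arc, a polygon in the half-plane of
     angle 0 (coordinates (r, z)), from the outer endpoint (5/2, 0) to the
     inner endpoint (3/2, 0): it first dips to height -1/2, passing UNDER
     the n strands of the backward part, then rises to height +1/2 at a
     radius c strictly between the backward and forward strands, passing
     OVER the m strands of the forward part. *)
Definition mazur_path (R : realType) (m n : nat) (t : R) : R * R * R :=
  let L : R := (m + n).+1%:R in
  let c : R := 3 / 2 + (m%:R + 1 / 2) / L in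
  if t <= L then
    let th := if t <= m%:R + 1 / 2 then t else 2 * m%:R + 1 - t in
    cyl R (3 / 2 + t / L) th 0
  else
    let s := t - L in
    let P0 : R * R := (5 / 2, 0) in
    let P1 : R * R := (5 / 2 - 1 / (2 * L), - (1 / 2)) in
    let P2 : R * R := (c, - (1 / 2)) in
    let P3 : R * R := (c, 1 / 2) in
    let P4 : R * R := (3 / 2 + 1 / (2 * L), 1 / 2) in
    let P5 : R * R := (3 / 2, 0) in
    let q := if s <= 1 then lerp2 R P0 P1 s
             else if s <= 2 then lerp2 R P1 P2 (s - 1)
             else if s <= 3 then lerp2 R P2 P3 (s - 2)
             else if s <= 4 then lerp2 R P3 P4 (s - 3)
             else lerp2 R P4 P5 (s - 4) in
    (q.1, 0, q.2).

(* 1-periodic parametrisation R -> R^3 of Q_{m,n} (a map from the circle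
   R/Z), with its natural orientation (forward m-part first). *)
Definition mazur_param (R : realType) (m n : nat) (s : R) : R * R * R :=
  mazur_path R m n ((s - (Num.floor s)%:~R) * (m + n + 6)%:R).

Definition mazur_knot (R : realType) (m n : nat) : set (R * R * R) :=
  range (mazur_param R m n).

Definition ambient_isotopy (R : realType) {T : topologicalType}
    (V : set T) (H : R -> T -> T) : Prop :=
  [/\ {within [set q : R * T | 0 <= q.1 <= 1 /\ V q.2],
         continuous (fun q : R * T => H q.1 q.2)},
      (forall p, V p -> H 0 p = p) &
      (forall t, 0 <= t <= 1 ->
         (forall p, V p -> V (H t p)) /\
         exists G : T -> T,
           [/\ (forall p, V p -> V (G p)),
               (forall p, V p -> G (H t p) = p),
               (forall p, V p -> H t (G p) = p) &
               {within V, continuous G}])].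

Definition orientation_reversing_lift (R : realType) (phi : R -> R) : Prop :=
  [/\ continuous phi,
      (forall x y, x < y -> phi y < phi x) &
      (forall s, phi (s + 1) = phi s - 1)].

(* Main.v *)
Require Import Defs.
From mathcomp Require Import all_boot all_order all_algebra.
From mathcomp Require Import all_classical all_reals all_analysis.
From mathcomp Require Import ring lra.
Import Order.TTheory GRing.Theory Num.Theory.
Import numFieldNormedType.Exports.
Local Open Scope classical_set_scope.
Local Open Scope ring_scope.

Section B.
Context {R : realType} {T : topologicalType}.
Implicit Types f g : T -> R.

Lemma cC (c : R) : continuous (fun _ : T => c).
Proof. by move=> x; apply: cvg_cst. Qed.
Lemma cD f g : continuous f -> continuous g -> continuous (fun x => f x + g x).
Proof. by move=> cf cg x; apply: cvgD; [apply: cf|apply: cg]. Qed.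
Lemma cM f g : continuous f -> continuous g -> continuous (fun x => f x * g x).
Proof. by move=> cf cg x; apply: cvgM; [apply: cf|apply: cg]. Qed.
Lemma cN f : continuous f -> continuous (fun x => - f x).
Proof. by move=> cf x; apply: cvgN; apply: cf. Qed.
Lemma cV f : (forall x, f x != 0) -> continuous f -> continuous (fun x => (f x)^-1).
Proof. by move=> h cf x; apply: cvgV => //; apply: cf. Qed.
Lemma cF (h : R -> R) f : continuous h -> continuous f -> continuous (fun x => h (f x)).
Proof. by move=> ch cf x; apply: (continuous_comp (cf x) (ch _)). Qed.
Lemma cmax f g : continuous f -> continuous g -> continuous (fun x => Num.max (f x) (g x)).
Proof. move=> cf cg x; have := @continuous_max R T f g x (cf x) (cg x). by []. Qed.
Lemma cmin f g : continuous f -> continuous g -> continuous (fun x => Num.min (f x) (g x)).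
Proof. move=> cf cg x; have := @continuous_min R T f g x (cf x) (cg x). by []. Qed.
End B.

Lemma cfst {T U : topologicalType} : continuous (@fst T U).
Proof. move=> [x y]; exact: cvg_fst. Qed.
Lemma csnd {T U : topologicalType} : continuous (@snd T U).
Proof. move=> [x y]; exact: cvg_snd. Qed.
Lemma cpair {T U V : topologicalType} (f : T -> U) (g : T -> V) :
  continuous f -> continuous g -> continuous (fun x => (f x, g x)).
Proof. move=> cf cg x; apply: cvg_pair; [apply: cf|apply: cg]. Qed.
Lemma ccomp {T U W : topologicalType} (f : T -> U) (g : U -> W) :
  continuous f -> continuous g -> continuous (fun x => g (f x)).
Proof. by move=> cf cg x; apply: (continuous_comp (cf x) (cg _)). Qed.


Section H.
Variable R : realType.

Definition gf (rho : R) : R := Num.min 1 (Num.max 0 (4 - 4 * rho)).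
Definition rr (p : R * R * R) : R := Num.max 1 (Num.sqrt (p.1.1 * p.1.1 + p.1.2 * p.1.2)).
Definition ang (t : R) (p : R * R * R) : R :=
  pi * t * gf (Num.sqrt ((rr p - 2) * (rr p - 2) + p.2 * p.2)).
Definition a' (t : R) (p : R * R * R) : R :=
  (rr p - 2) * cos (ang t p) - p.2 * sin (ang t p).
Definition b' (t : R) (p : R * R * R) : R :=
  (rr p - 2) * sin (ang t p) + p.2 * cos (ang t p).
Definition Hf (t : R) (p : R * R * R) : R * R * R :=
  (p.1.1 * ((2 + a' t p) * (rr p)^-1), p.1.2 * ((2 + a' t p) * (rr p)^-1), b' t p).

Section C.
Context {T : topologicalType} (tf : T -> R) (f : T -> R * R * R)
  (ct : continuous tf) (cf : continuous f).
Let c0 : continuous (fun x => (f x).1).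
Proof. apply: (@ccomp _ _ _ f fst) => //; exact: cfst. Qed.
Let c1 : continuous (fun x => (f x).1.1).
Proof. apply: (@ccomp _ _ _ (fun x => (f x).1) fst) => //; exact: cfst. Qed.
Let c2 : continuous (fun x => (f x).1.2).
Proof. apply: (@ccomp _ _ _ (fun x => (f x).1) snd) => //; exact: csnd. Qed.
Let c3 : continuous (fun x => (f x).2).
Proof. apply: (@ccomp _ _ _ f snd) => //; exact: csnd. Qed.
Let crr : continuous (fun x => rr (f x)).
Proof.
rewrite /rr; apply: cmax; first exact: cC.
apply: cF; first exact: sqrt_continuous.
by apply: cD; apply: cM.
Qed.
Let cgf (h : T -> R) : continuous h -> continuous (fun x => gf (h x)).
Proof.
move=> ch; rewrite /gf; apply: cmin; first exact: cC.
apply: cmax; first exact: cC.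
apply: cD; first exact: cC.
apply: cN; apply: cM => //; exact: cC.
Qed.
Let cang : continuous (fun x => ang (tf x) (f x)).
Proof.
rewrite /ang; apply: cM; first by apply: cM => //; exact: cC.
apply: cgf; apply: cF; first exact: sqrt_continuous.
apply: cD; apply: cM => //; apply: cD => //; exact: cC.
Qed.
Let cr2 : continuous (fun x => rr (f x) - 2).
Proof. apply: cD => //; exact: cC. Qed.
Let ccos : continuous (fun x => cos (ang (tf x) (f x))).
Proof. apply: cF => //; exact: continuous_cos. Qed.
Let csin : continuous (fun x => sin (ang (tf x) (f x))).
Proof. apply: cF => //; exact: continuous_sin. Qed.
Let ca : continuous (fun x => a' (tf x) (f x)).
Proof. rewrite /a'; apply: cD; first exact: cM. by apply: cN; apply: cM. Qed.
Let cb : continuous (fun x => b' (tf x) (f x)).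
Proof. rewrite /b'; apply: cD; exact: cM. Qed.
Lemma cont_H : continuous (fun x => Hf (tf x) (f x)).
Proof.
have rne : forall x, rr (f x) != 0.
  by move=> x; rewrite /rr; apply: lt0r_neq0; apply: (lt_le_trans ltr01); rewrite le_max lexx.
have cq : continuous (fun x => (2 + a' (tf x) (f x)) * (rr (f x))^-1).
  apply: cM; first by apply: cD => //; exact: cC.
  exact: cV.
rewrite /Hf; apply: cpair => //.
by apply: cpair; apply: cM.
Qed.
End C.
End H.


Arguments gf {R}. Arguments rr {R}. Arguments ang {R}. Arguments a' {R}. Arguments b' {R}. Arguments Hf {R}.
Section E.
Variable R : realType.
Implicit Types p : R * R * R.

Lemma sqrt_id (u : R) : 0 <= u -> Num.sqrt (u * u) = u.
Proof. by move=> h; rewrite -expr2 sqrtr_sqr ger0_norm. Qed.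

Lemma sqrt_sq (u : R) : 0 <= u -> Num.sqrt u * Num.sqrt u = u.
Proof. by move=> h; rewrite -expr2 sqr_sqrtr. Qed.

Lemma rr_V p : solid_torus R p ->
  [/\ rr p * rr p = p.1.1 * p.1.1 + p.1.2 * p.1.2, 1 <= rr p & rr p <= 3].
Proof.
case: p => [[x y] z] [] /= /andP[h1 h2] _.
rewrite /rr /= -!expr2.
have s1 : 1 <= Num.sqrt (x ^+ 2 + y ^+ 2) by rewrite -sqrtr1 ler_sqrt //; lra.
rewrite max_r //; split => //.
  by rewrite sqr_sqrtr //; lra.
have hs : Num.sqrt (x^+2+y^+2) ^+2 = x^+2+y^+2 by rewrite sqr_sqrtr //; lra.
move: s1 hs; set s := Num.sqrt _ => s1 hs; nra.
Qed.

Lemma gf0 (u : R) : 1 <= u -> gf u = 0.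
Proof. move=> h; rewrite /gf (@max_l _ _ 0) ?min_r //; lra. Qed.
Lemma gf1 (u : R) : u <= 3/4 -> gf u = 1.
Proof. move=> h; rewrite /gf max_r ?min_l //; lra. Qed.

Lemma rot_norm t p : a' t p ^+ 2 + b' t p ^+ 2 = (rr p - 2) ^+ 2 + p.2 ^+ 2.
Proof.
rewrite /a' /b'; have := cos2Dsin2 (ang t p).
set c := cos _; set s := sin _ => h.
have -> : ((rr p - 2) * c - p.2 * s) ^+ 2 + ((rr p - 2) * s + p.2 * c) ^+ 2
  = ((rr p - 2) ^+ 2 + p.2 ^+ 2) * (c ^+ 2 + s ^+ 2) by ring.
by rewrite h mulr1.
Qed.

Lemma ab_bound t p : solid_torus R p ->
  [/\ -1 <= a' t p, a' t p <= 1, -1 <= b' t p & b' t p <= 1].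
Proof.
move=> hV; have [_ h1 h3] := rr_V _ hV.
have hz : -1 <= p.2 <= 1 by case: hV.
move/andP: hz => [hz1 hz2].
have hn := rot_norm t p.
have [hr|hr] := leP 1 (Num.sqrt ((rr p - 2) * (rr p - 2) + p.2 * p.2)).
  have h0 : ang t p = 0 by rewrite /ang gf0 // mulr0.
  rewrite /a' /b' h0 cos0 sin0 !mulr0 !mulr1 subr0 add0r; split; lra.
have hq : 0 <= (rr p - 2) * (rr p - 2) + p.2 * p.2 by nra.
have : (rr p - 2) * (rr p - 2) + p.2 * p.2 < 1.
  move: hr; rewrite -[X in _ < X]sqrtr1 ltr_sqrt //; lra.
move=> hl; rewrite -!expr2 in hl; split; nra.
Qed.

Lemma Hf_sq t p : solid_torus R p ->
  (Hf t p).1.1 * (Hf t p).1.1 + (Hf t p).1.2 * (Hf t p).1.2 = (2 + a' t p) * (2 + a' t p).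
Proof.
move=> hV; have [hr h1 _] := rr_V _ hV.
have rn : rr p != 0 by apply: lt0r_neq0; lra.
rewrite /Hf /=.
set A := 2 + a' t p; set r := rr p in hr rn *.
have -> : p.1.1 * (A * r^-1) * (p.1.1 * (A * r^-1)) + p.1.2 * (A * r^-1) * (p.1.2 * (A * r^-1))
  = A * A * (p.1.1 * p.1.1 + p.1.2 * p.1.2) / (r * r) by field.
by rewrite -hr; field.
Qed.

Lemma HV t p : solid_torus R p -> solid_torus R (Hf t p).
Proof.
move=> hV; have [ha1 ha2 hb1 hb2] := ab_bound t _ hV.
have hs := Hf_sq t _ hV.
rewrite /solid_torus /=; split.
  move: hs => /=; rewrite -!expr2 => ->; apply/andP; split; nra.
by apply/andP; split.
Qed.

Lemma rr_H t p : solid_torus R p -> rr (Hf t p) = 2 + a' t p.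
Proof.
move=> hV; have [ha1 ha2 _ _] := ab_bound t _ hV.
rewrite /rr Hf_sq // sqrt_id; last lra.
by rewrite max_r //; lra.
Qed.

Lemma Hinv t p : solid_torus R p -> Hf (- t) (Hf t p) = p.
Proof.
move=> hV; have [hr h1 _] := rr_V _ hV.
have [ha1 ha2 _ _] := ab_bound t _ hV.
have rH := rr_H t _ hV.
have hn := rot_norm t p.
have e2 : (Hf t p).2 = b' t p by [].
have eang : ang (- t) (Hf t p) = - ang t p.
  rewrite /ang rH e2.
  have -> : 2 + a' t p - 2 = a' t p by ring.
  rewrite -!expr2 hn; ring.
have ea : a' (- t) (Hf t p) = rr p - 2.
  rewrite /a' eang rH e2 cosN sinN /a' /b'.
  have := cos2Dsin2 (ang t p); set c := cos _; set s := sin _ => h.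
  have -> : (2 + ((rr p - 2) * c - p.2 * s) - 2) * c - ((rr p - 2) * s + p.2 * c) * - s
    = (rr p - 2) * (c ^+ 2 + s ^+ 2) by ring.
  by rewrite h mulr1.
have eb : b' (- t) (Hf t p) = p.2.
  rewrite /b' eang rH e2 cosN sinN /a' /b'.
  have := cos2Dsin2 (ang t p); set c := cos _; set s := sin _ => h.
  have -> : (2 + ((rr p - 2) * c - p.2 * s) - 2) * - s + ((rr p - 2) * s + p.2 * c) * c
    = p.2 * (c ^+ 2 + s ^+ 2) by ring.
  by rewrite h mulr1.
have rn : rr p != 0 by apply: lt0r_neq0; lra.
have an : 2 + a' t p != 0 by apply: lt0r_neq0; lra.
rewrite {1}/Hf ea eb rH /=.
have key : forall u r A : R, r != 0 -> 2 + A != 0 ->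
  u * ((2 + A) / r) * ((2 + (r - 2)) / (2 + A)) = u.
  by move=> u r0 A0 hr0 hA0; field; rewrite hr0 hA0.
by move: rn an; case: p {hV hr h1 rH hn e2 eang ea eb ha1 ha2} => [[x y] z] /= rn an; rewrite !key.
Qed.
End E.

Arguments gf {R}. Arguments rr {R}. Arguments ang {R}. Arguments a' {R}. Arguments b' {R}. Arguments Hf {R}.

Arguments sqrt_id {R}. Arguments sqrt_sq {R}. Arguments gf0 {R}. Arguments gf1 {R}. Arguments rr_V {R}. Arguments rot_norm {R}. Arguments ab_bound {R}. Arguments Hf_sq {R}. Arguments HV {R}. Arguments rr_H {R}. Arguments Hinv {R}.
Section G.
Variable R : realType.

Lemma H0 (p : R * R * R) : solid_torus R p -> Hf 0 p = p.
Proof.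
move=> hV; have [_ h1 _] := rr_V _ hV.
have e : ang 0 p = 0 by rewrite /ang mulr0 mul0r.
have rn : rr p != 0 by apply: lt0r_neq0; lra.
rewrite /Hf /a' /b' e cos0 sin0 !mulr0 !mulr1 subr0 add0r.
have -> : (2 + (rr p - 2)) / rr p = 1 by rewrite addrC subrK divff.
by case: p {hV h1 e rn} => [[x y] z] /=; rewrite !mulr1.
Qed.

Lemma H1_gen (x y z r : R) : 3/2 <= r <= 5/2 -> x * x + y * y = r * r ->
  -(1/2) <= z <= 1/2 ->
  Hf 1 (x, y, z) = (x * ((4 - r) / r), y * ((4 - r) / r), - z).
Proof.
move=> /andP[r1 r2] hxy /andP[z1 z2].
have er : rr (x, y, z) = r.
  rewrite /rr /= hxy sqrt_id; last lra.
  rewrite /Num.max; case: ifP => //; lra.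
have eg : gf (Num.sqrt ((r - 2) * (r - 2) + z * z)) = 1.
  apply: gf1.
  have hq : 0 <= (r - 2) * (r - 2) + z * z by rewrite -!expr2 addr_ge0 // sqr_ge0.
  have := sqrt_sq _ hq; have := sqrtr_ge0 ((r - 2) * (r - 2) + z * z).
  set q := Num.sqrt _ => h0 hs; nra.
have ea : ang 1 (x, y, z) = pi by rewrite /ang er /= eg !mulr1.
rewrite /Hf /a' /b' ea er cospi sinpi /=.
congr (_, _, _); [congr (_ * (_ / _)); ring | congr (_ * (_ / _)); ring | ring].
Qed.
End G.

Arguments gf {R}. Arguments rr {R}. Arguments ang {R}. Arguments a' {R}. Arguments b' {R}. Arguments Hf {R}.
Arguments H1_gen {R}.

Section I.
Variable R : realType.

Definition Pt (L c : R) (k : nat) : R * R :=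
  match k with
  | 0 => (5 / 2, 0)
  | 1 => (5 / 2 - 1 / (2 * L), - (1 / 2))
  | 2 => (c, - (1 / 2))
  | 3 => (c, 1 / 2)
  | 4 => (3 / 2 + 1 / (2 * L), 1 / 2)
  | _ => (3 / 2, 0)
  end.

Definition clasp (L c s : R) : R * R :=
  if s <= 1 then lerp2 R (Pt L c 0) (Pt L c 1) s
  else if s <= 2 then lerp2 R (Pt L c 1) (Pt L c 2) (s - 1)
  else if s <= 3 then lerp2 R (Pt L c 2) (Pt L c 3) (s - 2)
  else if s <= 4 then lerp2 R (Pt L c 3) (Pt L c 4) (s - 3)
  else lerp2 R (Pt L c 4) (Pt L c 5) (s - 4).

Lemma lerp1 (A B : R * R) : lerp2 R A B 1 = B.
Proof. by case: A B => a1 a2 [b1 b2]; rewrite /lerp2 /= subrr !mul0r !mul1r !add0r. Qed.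
Lemma lerp0 (A B : R * R) : lerp2 R A B 0 = A.
Proof. by case: A B => a1 a2 [b1 b2]; rewrite /lerp2 /= subr0 !mul0r !mul1r !addr0. Qed.

Lemma clasp_seg L c (k : nat) s : (k <= 4)%N -> k%:R <= s <= k%:R + 1 ->
  clasp L c s = lerp2 R (Pt L c k) (Pt L c k.+1) (s - k%:R).
Proof.
rewrite /clasp.
case: k => [|[|[|[|[|k]]]]] //= _ /andP[h1 h2].
- by rewrite ifT ?subr0 //; lra.
- case: ifP => [h|_]; last by rewrite ifT //; lra.
  have -> : s = 1 by lra.
  by rewrite subrr lerp1 lerp0.
- case: ifP => [h|_]; first by exfalso; lra.
  case: ifP => [h|_]; last by rewrite ifT //; lra.
  have e1 : s - 1 = 1 by lra.
  have e2 : s - 2 = 0 by lra.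
  by rewrite e1 e2 lerp1 lerp0.
- case: ifP => [h|_]; first by exfalso; lra.
  case: ifP => [h|_]; first by exfalso; lra.
  case: ifP => [h|_]; last by rewrite ifT //; lra.
  have e1 : s - 2 = 1 by lra.
  have e2 : s - 3 = 0 by lra.
  by rewrite e1 e2 lerp1 lerp0.
- case: ifP => [h|_]; first by exfalso; lra.
  case: ifP => [h|_]; first by exfalso; lra.
  case: ifP => [h|_]; first by exfalso; lra.
  case: ifP => [h|_] //.
  have e1 : s - 3 = 1 by lra.
  have e2 : s - 4 = 0 by lra.
  by rewrite e1 e2 lerp1 lerp0.
Qed.

Lemma Pt_bound L c k : 1 <= L -> 3/2 <= c <= 5/2 ->
  [/\ 3/2 <= (Pt L c k).1, (Pt L c k).1 <= 5/2, -(1/2) <= (Pt L c k).2 & (Pt L c k).2 <= 1/2].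
Proof.
move=> hL /andP[c1 c2].
have hw : 0 < 1 / (2 * L) <= 1 / 2.
  apply/andP; split; first by apply: divr_gt0 => //; lra.
  rewrite ler_pdivrMr; last lra.
  rewrite mulrC mulrA; nra.
move/andP: hw => [w1 w2].
by case: k => [|[|[|[|[|k]]]]] /=; split; lra.
Qed.

Lemma lerp_bound (A B : R * R) l lo1 hi1 lo2 hi2 : 0 <= l <= 1 ->
  lo1 <= A.1 <= hi1 -> lo1 <= B.1 <= hi1 -> lo2 <= A.2 <= hi2 -> lo2 <= B.2 <= hi2 ->
  [/\ lo1 <= (lerp2 R A B l).1, (lerp2 R A B l).1 <= hi1,
      lo2 <= (lerp2 R A B l).2 & (lerp2 R A B l).2 <= hi2].
Proof.
case: A B => a1 a2 [b1 b2] /= /andP[l1 l2] /andP[h1 h2] /andP[h3 h4] /andP[h5 h6] /andP[h7 h8].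
rewrite /lerp2 /=; split; nra.
Qed.

Lemma Prot L c j : (j <= 5)%N ->
  Pt L (4 - c) j = (4 - (Pt L c (5 - j)).1, - (Pt L c (5 - j)).2).
Proof.
case: j => [|[|[|[|[|[|j]]]]]] //= _; congr (_, _); try ring; lra.
Qed.

Lemma clasp_main L c s : 1 <= L -> 3/2 <= c <= 5/2 -> 0 <= s <= 5 ->
  Hf 1 ((clasp L c s).1, 0, (clasp L c s).2)
  = ((clasp L (4 - c) (5 - s)).1, 0, (clasp L (4 - c) (5 - s)).2).
Proof.
move=> hL hc /andP[s0 s5].
have [k [hk /andP[hs1 hs2]]] : exists k, (k <= 4)%N /\ k%:R <= s <= k%:R + 1.
  have [h|h] := leP s 1; first by exists 0%N; split => //; apply/andP; split; lra.
  have [h'|h'] := leP s 2; first by exists 1%N; split => //; apply/andP; split; lra.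
  have [h''|h''] := leP s 3; first by exists 2%N; split => //; apply/andP; split; lra.
  have [h3|h3] := leP s 4; first by exists 3%N; split => //; apply/andP; split; lra.
  by exists 4%N; split => //; apply/andP; split; lra.
have hk' : ((4 - k)%:R : R) = 4 - k%:R by rewrite natrB.
rewrite (clasp_seg _ _ _ _ hk); last by apply/andP.
rewrite (clasp_seg _ _ (4 - k)%N); last first.
  by rewrite hk'; apply/andP; split; lra.
  by rewrite leq_subr.
rewrite hk' !Prot; last 2 first.
  by case: k {hs1 hs2 hk'} hk => [|[|[|[|[|k]]]]].
  by case: k {hs1 hs2 hk'} hk => [|[|[|[|[|k]]]]].
have e1 : (5 - (4 - k))%N = k.+1 by clear -hk; case: k hk => [|[|[|[|[|k]]]]].
have e2 : (5 - (4 - k).+1)%N = k by clear -hk; case: k hk => [|[|[|[|[|k]]]]].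
rewrite e1 e2.
set A := Pt L c k; set B := Pt L c k.+1.
have [a1 a2 a3 a4] := Pt_bound _ _ k hL hc.
have [b1 b2 b3 b4] := Pt_bound _ _ k.+1 hL hc.
have hl : 0 <= s - k%:R <= 1 by apply/andP; split; lra.
have [q1 q2 q3 q4] := @lerp_bound A B _ _ _ _ _ hl
  (introT andP (conj a1 a2)) (introT andP (conj b1 b2))
  (introT andP (conj a3 a4)) (introT andP (conj b3 b4)).
rewrite (H1_gen _ _ _ (lerp2 R A B (s - k%:R)).1); first last.
- by apply/andP; split.
- by rewrite mul0r addr0.
- by apply/andP; split.
have qn : (lerp2 R A B (s - k%:R)).1 != 0 by apply: lt0r_neq0; lra.
have el : 5 - s - (4 - k%:R) = 1 - (s - k%:R) by ring.
rewrite el mul0r.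
move: qn; set l := s - k%:R; case: A {a1 a2 a3 a4 q1 q2 q3 q4} => a1 a2; case: B {b1 b2 b3 b4} => b1 b2.
rewrite /lerp2 /= => qn.
congr (_, _, _); last ring.
by field.
Qed.
End I.

Arguments gf {R}. Arguments rr {R}. Arguments ang {R}. Arguments a' {R}. Arguments b' {R}. Arguments Hf {R}.
Arguments H1_gen {R}.

Section J.
Variable R : realType.

Lemma twopik (x : R) (k : nat) : 2 * pi * (x + k%:R) = 2 * pi * x + (pi *+ 2) *+ k.
Proof. by rewrite mulrDr; congr (_ + _); rewrite -mulrnA -[RHS]mulr_natr natrM; ring. Qed.

Lemma cyl_shift1 (r x : R) (k : nat) : cyl R r (x + k%:R) 0 = cyl R r x 0.
Proof.
by rewrite /cyl twopik (periodicn (@cosD2pi R)) (periodicn (@sinD2pi R)).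
Qed.

Lemma cyl_shift (r x : R) (n m : nat) : cyl R r (x + (n%:R - m%:R)) 0 = cyl R r x 0.
Proof.
rewrite -(cyl_shift1 r _ m) -(cyl_shift1 r x n).
by congr (cyl R r _ 0); ring.
Qed.

Lemma spiral_main (r th : R) : 3/2 <= r <= 5/2 -> Hf 1 (cyl R r th 0) = cyl R (4 - r) th 0.
Proof.
move=> hr; rewrite /cyl (H1_gen _ _ _ r) //; last first.
- by apply/andP; split; lra.
- have := cos2Dsin2 (2 * pi * th); set c := cos _; set s := sin _ => h.
  have -> : r * c * (r * c) + r * s * (r * s) = r * r * (c ^+ 2 + s ^+ 2) by ring.
  by rewrite h mulr1.
have rn : r != 0 by apply: lt0r_neq0; case/andP: hr => *; lra.
by congr (_, _, _); [field|field|rewrite oppr0].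
Qed.
End J.

Arguments gf {R}. Arguments rr {R}. Arguments ang {R}. Arguments a' {R}. Arguments b' {R}. Arguments Hf {R}.
Arguments H1_gen {R}. Arguments clasp {R}. Arguments clasp_main {R}. Arguments spiral_main {R}. Arguments cyl_shift {R}.

Section K.
Variable R : realType.

Definition mp (m : nat) (L t : R) : R * R * R :=
  if t <= L then cyl R (3/2 + t/L) (if t <= m%:R + 1/2 then t else 2 * m%:R + 1 - t) 0
  else ((clasp L (3/2 + (m%:R + 1/2)/L) (t - L)).1, 0,
        (clasp L (3/2 + (m%:R + 1/2)/L) (t - L)).2).

Lemma mp_eq (m n : nat) (L t : R) : L = (m + n).+1%:R -> mazur_path R m n t = mp m L t.
Proof. by move=> ->. Qed.

Lemma mp_main (m n : nat) (L t : R) : L = m%:R + n%:R + 1 -> 0 <= t < L + 5 ->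
  Hf 1 (mp m L t) = mp n L (if t <= L then L - t else L - t + (L + 5)).
Proof.
move=> eL /andP[t0 tK].
have m0 : (0 : R) <= m%:R by [].
have n0 : (0 : R) <= n%:R by [].
have Lpos : 1 <= L by lra.
have Ln : L != 0 by apply: lt0r_neq0; lra.
rewrite /mp.
have [ht|ht'] := leP t L.
  have hLt : L - t <= L by lra.
  rewrite hLt.
  rewrite spiral_main; last first.
    apply/andP; split.
      have : 0 <= t / L by apply: divr_ge0; lra.
      lra.
    have : t / L <= 1 by rewrite ler_pdivrMr; lra.
    lra.
  have -> : 4 - (3 / 2 + t / L) = 3 / 2 + (L - t) / L by field.
  set th := (if t <= m%:R + 1/2 then t else 2 * m%:R + 1 - t).
  have -> : (if L - t <= n%:R + 1 / 2 then L - t else 2 * n%:R + 1 - (L - t))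
    = th + (n%:R - m%:R).
    rewrite /th; case: leP => h1; case: leP => h2; lra.
  by rewrite cyl_shift.
have hh : (L - t + (L + 5) <= L) = false by apply/negbTE; rewrite -ltNge; lra.
rewrite hh.
have -> : L - t + (L + 5) - L = 5 - (t - L) by ring.
have -> : 3 / 2 + (n%:R + 1 / 2) / L = 4 - (3 / 2 + (m%:R + 1 / 2) / L).
  by rewrite eL; field; rewrite -eL.
apply: clasp_main => //.
  have h1 : 0 <= (m%:R + 1/2) / L by apply: divr_ge0; lra.
  have h2 : (m%:R + 1/2) / L <= 1 by rewrite ler_pdivrMr; lra.
  apply/andP; split; lra.
apply/andP; split; lra.
Qed.
End K.

Arguments gf {R}. Arguments rr {R}. Arguments ang {R}. Arguments a' {R}. Arguments b' {R}. Arguments Hf {R}.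
Arguments mp {R}. Arguments mp_eq {R}. Arguments mp_main {R}.

Section M.
Variable R : realType.

Definition phi (m n : nat) (s : R) : R := (m + n).+1%:R / (m + n + 6)%:R - s.

Lemma param_main (m n : nat) (s : R) :
  Hf 1 (mazur_param R m n s) = mazur_param R n m (phi m n s).
Proof.
set L : R := (m + n).+1%:R.
have eL : L = m%:R + n%:R + 1 by rewrite /L -addn1 !natrD.
have eK : ((m + n + 6)%:R : R) = L + 5.
  rewrite eL !natrD; lra.
have eK' : ((n + m + 6)%:R : R) = L + 5 by rewrite (addnC n m).
have m0 : (0 : R) <= m%:R by [].
have n0 : (0 : R) <= n%:R by [].
have Lpos : 1 <= L by lra.
have Kpos : 0 < L + 5 by lra.
rewrite /mazur_param eK eK'.
set fl := Num.floor s.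
have [f0 f1] : 0 <= s - fl%:~R /\ s - fl%:~R < 1.
  have := floor_itv s; rewrite -/fl intrD => /andP[h1 h2]; split; lra.
set t := (s - fl%:~R) * (L + 5).
have t0 : 0 <= t by apply: mulr_ge0; lra.
have tK : t < L + 5 by rewrite /t -[X in _ < X]mul1r ltr_pM2r //.
rewrite (mp_eq m n L) // (mp_main m n L t) //; last by apply/andP.
rewrite (mp_eq n m L); last by rewrite /L addnC.
congr (mp n L _).
have ephi : phi m n s = L / (L + 5) - s by rewrite /phi -eK.
rewrite ephi.
have [ht|ht] := leP t L.
  have -> : Num.floor (L / (L + 5) - s) = - fl.
    apply: floor_def; rewrite intrD mulrNz.
    have : t / (L + 5) <= L / (L + 5) by rewrite ler_pM2r // invr_gt0.
    rewrite /t mulfK; last by apply: lt0r_neq0.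
    move=> h; apply/andP; split; first lra.
    have : L / (L + 5) < 1 by rewrite ltr_pdivrMr //; lra.
    lra.
  rewrite mulrNz opprK /t; field; apply: lt0r_neq0 => //.
have -> : Num.floor (L / (L + 5) - s) = - fl - 1.
  apply: floor_def; rewrite !intrD mulrNz subrK.
  have : L / (L + 5) < t / (L + 5) by rewrite ltr_pM2r // invr_gt0.
  rewrite /t mulfK; last by apply: lt0r_neq0.
  move=> h; apply/andP; split; last lra.
  have : 0 <= L / (L + 5) by apply: divr_ge0; lra.
  have e1 : ((-1 : int)%:~R : R) = -1 by rewrite mulrNz.
  rewrite e1; lra.
rewrite intrD mulrNz (_ : ((-1 : int)%:~R : R) = -1); last by rewrite mulrNz.
rewrite /t; field; apply: lt0r_neq0 => //.
Qed.
End M.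


Arguments gf {R}. Arguments rr {R}. Arguments ang {R}. Arguments a' {R}. Arguments b' {R}. Arguments Hf {R}.
Arguments phi {R}.

Lemma iso_H (R : realType) : ambient_isotopy R (solid_torus R) Hf.
Proof.
split.
- apply: continuous_subspaceT.
  exact: (cont_H R (fun q : R * (R * R * R) => q.1) (fun q => q.2) cfst csnd).
- by move=> p hV; apply: H0.
- move=> t _; split; first by move=> p hV; apply: HV.
  exists (Hf (- t)); split.
  + by move=> p hV; apply: HV.
  + by move=> p hV; apply: Hinv.
  + by move=> p hV; rewrite -{1}(opprK t); apply: Hinv.
  + apply: continuous_subspaceT.
    exact: (cont_H R (fun _ : R * R * R => - t) (fun q => q) (cC _) (fun x => cvg_id)).
Qed.

Lemma phi_lift (R : realType) (m n : nat) : orientation_reversing_lift R (phi m n).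
Proof.
split.
- rewrite /phi; apply: cD; first exact: cC.
  by apply: cN => x; apply: cvg_id.
- by move=> x y h; rewrite /phi; lra.
- by move=> x; rewrite /phi; ring.
Qed.

Theorem proposition1p1 (R : realType) (m n : nat) :
  (0 < m)%N -> (0 < n)%N ->
  (exists H : R -> R * R * R -> R * R * R,
      ambient_isotopy R (solid_torus R) H /\
      H 1 @` mazur_knot R m n = mazur_knot R n m) /\
  (exists (H : R -> R * R * R -> R * R * R) (phi : R -> R),
      [/\ ambient_isotopy R (solid_torus R) H,
          orientation_reversing_lift R phi &
          forall s, H 1 (mazur_param R m n s) = mazur_param R n m (phi s)]).
Proof.
move=> _ _; split.
  exists Hf; split; first exact: iso_H.
  apply/seteqP; split.
    by move=> _ [_ [s _ <-] <-]; exists (phi m n s) => //; rewrite param_main.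
  move=> _ [u _ <-].
  exists (mazur_param R m n (phi m n u)); first by exists (phi m n u).
  rewrite param_main; congr (mazur_param R n m _); rewrite /phi; ring.
exists Hf, (phi m n); split; [exact: iso_H | exact: phi_lift | ].
by move=> s; apply: param_main.
Qed.
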